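(* Let $\mathcal{C}\subset\mathbb{R}^N$ be a nonempty compact convex set with Euclidean projection $\pi_{\mathcal{C}}$. For every $p\in\mathcal{C}$, every $r>0$ and every unit vector $u\in\mathbb{R}^N$ ($\|u\|=1$), $$\langle u,\pi_{\mathcal{C}}(p+ru)-p\rangle\ge\frac{r}{2}\,\|u\|_{\mathcal{C}}^2(p;r).$$
   Context: Local norm: for $p\in\mathcal{C}$, a vector $u$ and $r>0$, $\|u\|_{\mathcal{C}}(p;r)=\sup_{v\in\mathcal{C},\,\|v-p\|=r}\max\big(\langle u,v-p\rangle/r,\,0\big)$ if there exists $v\in\mathcal{C}$ with $\|v-p\|=r$, and $\|u\|_{\mathcal{C}}(p;r)=0$ otherwise. *)

(* Defs.v *)
From HB Require Import structures.
From mathcomp Require Import all_boot all_order all_algebra.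
From mathcomp Require Import all_classical all_reals all_analysis.
Set Implicit Arguments. Unset Strict Implicit. Unset Printing Implicit Defensive.
Import Order.TTheory GRing.Theory Num.Theory.
Import numFieldNormedType.Exports.
Local Open Scope classical_set_scope.
Local Open Scope ring_scope.

Section Defs.
Variables (R : realType) (N : nat).
Implicit Types (u v x : 'rV[R]_N) (C : set 'rV[R]_N).

Definition dotp u v : R := \sum_(i < N) u ord0 i * v ord0 i.
Definition enorm u : R := Num.sqrt (dotp u u).

Definition eproj C x : 'rV[R]_N :=
  xget 0 [set q | C q /\ forall v, C v -> enorm (x - q) <= enorm (x - v)].

Definition local_norm C p u (r : R) : R :=
  if `[< exists v, C v /\ enorm (v - p) = r >] then
    sup [set Num.max (dotp u (v - p) / r) 0 | v in [set v | C v /\ enorm (v - p) = r]]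
  else 0.

End Defs.

(* Main.v *)
Require Import Defs.
From HB Require Import structures.
From mathcomp Require Import all_boot all_order all_algebra.
From mathcomp Require Import all_classical all_reals all_analysis.
From mathcomp Require Import ring lra.
Import Order.TTheory GRing.Theory Num.Theory.
Import numFieldNormedType.Exports.
Local Open Scope classical_set_scope.
Local Open Scope ring_scope.

Set Implicit Arguments.
Section Aux.
Context {R : realType} {N : nat}.
Implicit Types (u v w x : 'rV[R]_N).

Lemma dotpC u v : dotp u v = dotp v u.
Proof. by apply: eq_bigr => i _; rewrite mulrC. Qed.

Lemma dotpDl u v w : dotp (u + v) w = dotp u w + dotp v w.
Proof. by rewrite /dotp -big_split; apply: eq_bigr => i _; rewrite mxE mulrDl. Qed.

Lemma dotpZl a u w : dotp (a *: u) w = a * dotp u w.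
Proof. by rewrite /dotp mulr_sumr; apply: eq_bigr => i _; rewrite mxE mulrA. Qed.

Lemma dotpNl u w : dotp (- u) w = - dotp u w.
Proof. by rewrite /dotp -sumrN; apply: eq_bigr => i _; rewrite mxE mulNr. Qed.

Lemma dotpDr u v w : dotp w (u + v) = dotp w u + dotp w v.
Proof. by rewrite !(dotpC w) dotpDl. Qed.
Lemma dotpZr a u w : dotp w (a *: u) = a * dotp w u.
Proof. by rewrite !(dotpC w) dotpZl. Qed.
Lemma dotpNr u w : dotp w (- u) = - dotp w u.
Proof. by rewrite !(dotpC w) dotpNl. Qed.

Lemma dotp_ge0 u : 0 <= dotp u u.
Proof. by apply: sumr_ge0 => i _; rewrite -expr2 sqr_ge0. Qed.

Lemma dotp_exp a x y :
  dotp (a *: x - y) (a *: x - y) = a ^+ 2 * dotp x x - 2 * a * dotp x y + dotp y y.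
Proof.
rewrite !dotpDl !dotpNl !dotpDr !dotpNr !dotpZl !dotpZr.
rewrite (dotpC y x); ring.
Qed.

Lemma dotp_cont x : continuous (fun v : 'rV[R]_N => dotp (x - v) (x - v)).
Proof.
rewrite /dotp; apply: continuous_big; first exact: add_continuous.
move=> i _.
have hc : continuous (fun v : 'rV[R]_N => (x - v) ord0 i).
  have -> : (fun v : 'rV[R]_N => (x - v) ord0 i) = (fun v => x ord0 i - v ord0 i).
    by apply: funext => v; rewrite !mxE.
  move=> v; apply: continuousB; first exact: cst_continuous.
  exact: coord_continuous.
by move=> v; exact: (continuousM (hc v) (hc v)).
Qed.

End Aux.

Theorem theorem2p5 (R : realType) (N : nat) (C : set 'rV[R]_N) :
  C !=set0 -> compact C -> convex_set C ->
  forall (p u : 'rV[R]_N) (r : R), C p -> 0 < r -> enorm u = 1 ->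
  dotp u (eproj C (p + r *: u) - p) >= r / 2 * (local_norm C p u r) ^+ 2.
Proof.
move=> C0 cC cvxC p u r Cp r0 u1.
set x := p + r *: u.
have u2 : dotp u u = 1.
  by move: u1; rewrite /enorm => u1; rewrite -(sqr_sqrtr (dotp_ge0 u)) u1 expr1n.
have [q Cq qmin] : exists2 q, C q &
    forall v, C v -> enorm (x - q) <= enorm (x - v).
  have [c cin cmin] := EVT_min_rV C0 cC (continuous_subspaceT (@dotp_cont _ _ x)).
  exists c; first by rewrite inE in cin.
  move=> v Cv; rewrite /enorm ler_sqrt ?dotp_ge0 //; apply: cmin; rewrite inE.
  exact: Cv.
have [Cq' qmin'] : C (eproj C x) /\
    forall v, C v -> enorm (x - eproj C x) <= enorm (x - v).
  exact: (@xgetI _ 0 [set q | C q /\ forall v, C v -> enorm (x - q) <= enorm (x - v)] q (conj Cq qmin)).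
set q' := eproj C x.
set D := dotp u (q' - p).
have key : forall v, C v -> forall t, 0 <= t -> t <= 1 ->
    2 * t * r * dotp u (v - p) - t ^+ 2 * dotp (v - p) (v - p) <= 2 * r * D.
  move=> v Cv t t0 t1.
  have Cw : C (t *: v + (1 - t) *: p).
    by have := cvxC v p (Itv01 t0 t1) (mem_set Cv) (mem_set Cp); rewrite inE.
  have := qmin' _ Cw; rewrite /enorm ler_sqrt ?dotp_ge0 //.
  have -> : x - q' = r *: u - (q' - p) by apply/rowP => i; rewrite !mxE; ring.
  have -> : x - (t *: v + (1 - t) *: p) = r *: u - t *: (v - p).
    by apply/rowP => i; rewrite !mxE; ring.
  rewrite !dotp_exp !dotpZl !dotpZr u2 -/D.
  have := dotp_ge0 (q' - p).
  nra.
have D0 : 0 <= D.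
  have := key p Cp 0 (lexx 0) ler01; rewrite subrr /dotp.
  rewrite big1 ?mulr0 ?mul0r ?subrr ?expr0n /=; last by move=> i _; rewrite mxE mulr0.
  nra.
have elem : forall v, C v -> enorm (v - p) = r ->
    0 <= Num.max (dotp u (v - p) / r) 0 /\
    r * (Num.max (dotp u (v - p) / r) 0) ^+ 2 <= 2 * D.
  move=> v Cv; rewrite /enorm => hv.
  have E2 : dotp (v - p) (v - p) = r ^+ 2 by rewrite -hv sqr_sqrtr ?dotp_ge0.
  set c := dotp u (v - p).
  have cr : c <= r.
    have := dotp_ge0 (r *: u - (v - p)); rewrite dotp_exp u2 E2 -/c; nra.
  have [h|h] := leP (c / r) 0.
    by split => //; nra.
  have a1 : c / r <= 1 by rewrite ler_pdivrMr // mul1r.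
  have hk := key v Cv (c / r) (ltW h) a1; rewrite -/c E2 in hk.
  have ce : c = (c / r) * r by rewrite divfK // gt_eqF.
  split; first exact: ltW.
  move: h a1 ce hk; set a := c / r => h a1 ce hk.
  have h2 : r * (r * a ^+ 2) <= r * (2 * D) by rewrite ce in hk; nra.
  by rewrite ler_pM2l in h2.
rewrite /local_norm; case: asboolP => [[v0 [Cv0 hv0]]|_]; last first.
  by rewrite expr0n /= mulr0.
set S := [set _ | _ in _].
set L := sup S.
have S0 : S (Num.max (dotp u (v0 - p) / r) 0) by exists v0.
set B := Num.sqrt (2 * D / r).
have B0 : 0 <= B by apply: sqrtr_ge0.
have hB : r * B ^+ 2 = 2 * D.
  rewrite sqr_sqrtr; last by apply: divr_ge0; [nra | exact: ltW].
  by field; rewrite gt_eqF.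
have ubB : ubound S B.
  move=> s [v [Cv hv] <-]; have [s0 hs] := elem v Cv hv.
  move: s0 hs; set s' := Num.max _ _ => s0 hs.
  have h1 : r * s' ^+ 2 <= r * B ^+ 2 by rewrite hB.
  rewrite ler_pM2l // in h1; nra.
have LB : L <= B by apply: ge_sup => //; exists (Num.max (dotp u (v0 - p) / r) 0).
have L0 : 0 <= L.
  have [e0 _] := elem v0 Cv0 hv0.
  apply: le_trans e0 _; by apply: ub_le_sup => //; exists B.
have L2 : L ^+ 2 <= B ^+ 2 by nra.
have : r * L ^+ 2 <= r * B ^+ 2 by rewrite ler_pM2l.
rewrite hB; nra.
Qed.
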